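(* In the space $\widetilde{l_1}$, the sequence $\{2^{-i}e_{2^i}\}_{i=0}^\infty$ is equivalent to the canonical basis of $l_1$; that is, there are constants $0<c\le C$ such that $c\sum_{i=0}^n|c_i|\le\big\|\sum_{i=0}^nc_i2^{-i}e_{2^i}\big\|_{\widetilde{l_1}}\le C\sum_{i=0}^n|c_i|$ for all $n$ and all scalars $c_0,\dots,c_n$.
   Context: $e_m$ denotes the $m$-th unit vector sequence. For a real sequence $a=(a_n)_{n\ge1}$ let $\widetilde{a_n}=\sup_{k\ge n}|a_k|$; $\widetilde{l_1}$ is the space of sequences with $\|a\|_{\widetilde{l_1}}=\sum_{n\ge1}\widetilde{a_n}<\infty$. *)

(* Defs.v *)
From HB Require Import structures.
From mathcomp Require Import all_boot all_order all_algebra.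
From mathcomp Require Import all_classical all_reals all_analysis.
Set Implicit Arguments. Unset Strict Implicit. Unset Printing Implicit Defensive.
Import Order.TTheory GRing.Theory Num.Theory.
Local Open Scope ring_scope.
Local Open Scope classical_set_scope.

(* Real sequences a = (a_n)_{n>=1}, represented as nat -> R; the value at 0 is ignored. *)

Definition unitvec (R : realType) (m : nat) : nat -> R :=
  fun k => if k == m then 1 else 0.

Definition tilde_seq (R : realType) (a : nat -> R) (n : nat) : \bar R :=
  ereal_sup [set (`|a k|)%:E | k in [set k | (n <= k)%N]].

Definition tl1_norm (R : realType) (a : nat -> R) : \bar R :=
  (\sum_(1 <= n <oo) tilde_seq a n)%E.

(* Main.v *)
Require Import Defs.
From HB Require Import structures.
From mathcomp Require Import all_boot all_order all_algebra.
From mathcomp Require Import all_classical all_reals all_analysis.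
From mathcomp Require Import ring lra.
Import Order.TTheory GRing.Theory Num.Theory.
Local Open Scope ring_scope.

Lemma xval (R : realType) n (cs : nat -> R) i : (i < n.+1)%N ->
  (\sum_(j < n.+1) cs j * (2 ^- j) * unitvec R (2 ^ j)%N (2 ^ i)%N) = cs i * 2 ^- i.
Proof.
move=> lt; rewrite (bigD1 (Ordinal lt)) //= /unitvec eqxx mulr1 big1 ?addr0 //.
move=> j /= neq; rewrite eqn_exp2l // (_ : (i == j) = false) ?mulr0 //.
by apply/negbTE; apply: contra neq => /eqP eij; apply/eqP/val_inj => /=.
Qed.

Lemma tilde_ge0 (R : realType) (a : nat -> R) m : (0 <= tilde_seq a m)%E.
Proof.
apply: (@le_trans _ _ (`|a m|)%:E); first by rewrite lee_fin.
by apply: ereal_sup_ubound; exists m => //=.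
Qed.

Lemma tilde_ge (R : realType) (a : nat -> R) m k : (m <= k)%N -> ((`|a k|)%:E <= tilde_seq a m)%E.
Proof. by move=> h; apply: ereal_sup_ubound; exists k. Qed.

Lemma cnt (R : realType) N K : (K <= N)%N ->
  \sum_(1 <= m < N.+1) ((m <= K)%N%:R : R) = K%:R.
Proof.
move=> KN; rewrite (big_cat_nat (n:=K.+1)) //=.
rewrite [X in _ + X]big_nat_cond [X in _ + X]big1 ?addr0; last first.
  by move=> i /andP[/andP[h _] _]; rewrite leqNgt h.
rewrite big_nat_cond (eq_bigr (fun _ => 1)); last first.
  by move=> i /andP[/andP[_ h] _]; rewrite -ltnS h.
by rewrite -big_nat_cond sumr_const_nat subn1.
Qed.

Lemma upper (R : realType) n (cs : nat -> R) :
  (tl1_norm (fun k => (\sum_(i < n.+1) cs i * (2 ^- i) * unitvec R (2 ^ i)%N k)%R)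
     <= (1 * \sum_(i < n.+1) `|cs i|)%:E)%E.
Proof.
set x := fun k => _.
pose a i := `|cs i| * 2 ^- i.
have a0 i : 0 <= a i by rewrite /a mulr_ge0 // invr_ge0 exprn_ge0.
pose f m := \sum_(i < n.+1) a i * ((m <= 2 ^ i)%N)%:R.
have f0 m : 0 <= f m by apply: sumr_ge0 => i _; rewrite mulr_ge0.
have U1 m : (tilde_seq x m <= (f m)%:E)%E.
  apply/ereal_supP => y [k /= mk <-]; rewrite lee_fin.
  apply: (le_trans (ler_norm_sum _ _ _)); apply: ler_sum => i _.
  rewrite !normrM /a -!mulrA; apply: ler_wpM2l; first exact: normr_ge0.
  rewrite normfV normrX ger0_norm //; apply: ler_wpM2l; first by rewrite invr_ge0 exprn_ge0.
  rewrite /unitvec; case: (eqVneq k (2 ^ i)%N) => [ek|_]; first by rewrite -ek mk normr1.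
  by rewrite normr0 ler0n.
apply: (le_trans (lee_nneseries (v := fun m => (f m)%:E) _ _)).
- by move=> m _ _; apply: tilde_ge0.
- by move=> m _; apply: U1.
rewrite (@nneseries_split _ _ 1 (2 ^ n)%N); last by move=> k _; rewrite lee_fin.
rewrite eseries0 ?adde0; last first.
  move=> m hm _; rewrite /f big1 // => i _.
  rewrite (_ : (m <= 2 ^ i)%N = false) ?mulr0 //; apply/negbTE; rewrite -ltnNge.
  apply: leq_trans hm; rewrite add1n ltnS leq_pexp2l //; exact: ltn_ord i.
rewrite sumEFin lee_fin mul1r add1n /f exchange_big /= ler_sum // => i _.
rewrite -mulr_sumr cnt; last by rewrite leq_pexp2l //; exact: ltn_ord i.
rewrite /a natrX -mulrA mulVf ?mulr1 // expf_neq0 //.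
Qed.

Lemma lower (R : realType) n (cs : nat -> R) :
  (((1/2) * \sum_(i < n.+1) `|cs i|)%:E <=
   tl1_norm (fun k => (\sum_(i < n.+1) cs i * (2 ^- i) * unitvec R (2 ^ i)%N k)%R))%E.
Proof.
set x := (X in tl1_norm X).
have xn i : (i < n.+1)%N -> `|x (2 ^ i)%N| = `|cs i| * 2 ^- i.
  move=> hi; rewrite /x xval // normrM normfV normrX.
  by rewrite (@ger0_norm _ 2).
have L j : (j <= n)%N -> (((1/2) * \sum_(i < j.+1) `|cs i|)%:E <=
      \sum_(1 <= m < (2 ^ j).+1) tilde_seq x m)%E.
  elim: j => [_|j IH hj].
    rewrite expn0 big_nat1 big_ord1.
    apply: le_trans (@tilde_ge _ x 1 1 (leqnn _)).
    rewrite lee_fin; have := xn 0%N (ltn0Sn _); rewrite expn0 => ->; rewrite expr0 invr1 mulr1.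
    by rewrite ler_piMl ?normr_ge0 //; lra.
  have h1 : ((2 ^ j).+1 <= (2 ^ j.+1).+1)%N by rewrite ltnS leq_pexp2l.
  rewrite (big_cat_nat _ h1) //= big_ord_recr /= mulrDr EFinD.
  apply: leeD; first by apply: IH; exact: ltnW.
  apply: (@le_trans _ _ (\sum_((2 ^ j).+1 <= m < (2 ^ j.+1).+1) (`|cs j.+1| * 2 ^- j.+1)%:E)%E).
    rewrite sumEFin sumr_const_nat lee_fin.
    rewrite (_ : ((2 ^ j.+1).+1 - (2 ^ j).+1)%N = (2 ^ j)%N); last first.
      by rewrite subSS expnS mul2n -addnn addnK.
    rewrite -[leRHS]mulr_natr natrX exprS invfM.
    have t0 : (2 : R) ^+ j != 0 by rewrite expf_neq0.
    rewrite -[leRHS]mulrA mulfVK //; lra.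
  rewrite [X in (X <= _)%E]big_nat_cond [X in (_ <= X)%E]big_nat_cond.
  elim/big_ind2: _ => //; first by move=> *; exact: leeD.
  move=> m /andP[/andP[_ hm] _].
  rewrite -xn // tilde_ge //; by rewrite -ltnS.
apply: le_trans (L n (leqnn _)) _.
apply: nneseries_lim_ge => m _ _; exact: tilde_ge0.
Qed.

Theorem theorem2 (R : realType) :
  exists c C : R, 0 < c /\ c <= C /\
  forall (n : nat) (cs : nat -> R),
    let x : nat -> R :=
      fun k => \sum_(i < n.+1) cs i * (2 ^- i) * unitvec R (2 ^ i)%N k in
    ((c * \sum_(i < n.+1) `|cs i|)%:E <= tl1_norm x)%E /\
    (tl1_norm x <= (C * \sum_(i < n.+1) `|cs i|)%:E)%E.
Proof.
exists (1/2), 1; split; first lra.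
split; first lra.
move=> n cs x; split; [exact: lower | exact: upper].
Qed.
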